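(* Let $n\ge1$, $N=\{1,\dots,n\}$, $A=[0,1]$, and let $f:A^n\to A$ be a mechanism. Then $f$ is an order statistic mechanism if and only if $f$ is both an OWA mechanism and a generalized median voter scheme (GMVS).
   Context: A mechanism is a map $f:A^n\to A$ from profiles $x=(x_i)_{i\in N}$ of reported locations to a facility location. An OWA mechanism has weights $w_1,\dots,w_n\in[0,1]$ with $\sum_j w_j=1$ and returns $f(x)=\sum_{j=1}^n w_j x_{\pi(j)}$, where $\pi$ is a permutation of $N$ with $x_{\pi(1)}\le\dots\le x_{\pi(n)}$. An order statistic mechanism is one for which there is a fixed $j\in\{1,\dots,n\}$ with $f(x)=x_{\pi(j)}$ (the $j$-th smallest report) for all $x$, i.e., an OWA with $w_j=1$. $f$ is a GMVS if there are parameters $\alpha_S\in A$, one for each nonempty $S\subseteq N$, such that for all $x\in A^n$, $f(x)=\min_{\emptyset\ne S\subseteq N}\max\big(\{x_i: i\in S\}\cup\{\alpha_S\}\big)$. *)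

(* Defs.v *)
From HB Require Import structures.
From mathcomp Require Import all_boot all_order all_algebra all_fingroup.
From mathcomp Require Import reals.
Set Implicit Arguments. Unset Strict Implicit. Unset Printing Implicit Defensive.
Import Order.TTheory GRing.Theory Num.Theory.
Local Open Scope ring_scope.

Section Defs.
Variable R : realType.
Variable n : nat.

Definition inA (a : R) : Prop := 0 <= a <= 1.

(* profiles x in A^n, agents N = 'I_n (0-indexed) *)
Definition profile_in_A (x : 'I_n -> R) : Prop := forall i, inA (x i).

Definition sorting_perm (x : 'I_n -> R) (pi : {perm 'I_n}) : Prop :=
  forall j k : 'I_n, (j <= k)%N -> x (pi j) <= x (pi k).

Definition is_OWA (f : ('I_n -> R) -> R) : Prop :=
  exists w : 'I_n -> R,
    (forall j, inA (w j)) /\ \sum_(j < n) w j = 1 /\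
    forall x, profile_in_A x -> forall pi, sorting_perm x pi ->
      f x = \sum_(j < n) w j * x (pi j).

Definition is_order_statistic (f : ('I_n -> R) -> R) : Prop :=
  exists j : 'I_n,
    forall x, profile_in_A x -> forall pi, sorting_perm x pi ->
      f x = x (pi j).

(* min over nonempty S of max({x_i : i in S} u {alpha_S}); on [0,1] the
   neutral elements 1 (for min) and 0 (for max) are harmless. *)
Definition is_GMVS (f : ('I_n -> R) -> R) : Prop :=
  exists alpha : {set 'I_n} -> R,
    (forall S, S != set0 -> inA (alpha S)) /\
    forall x, profile_in_A x ->
      f x = \big[Num.min/1]_(S : {set 'I_n} | S != set0)
              Num.max (alpha S) (\big[Num.max/0]_(i in S) x i).

End Defs.

(* Main.v *)
Require Import Defs.
From HB Require Import structures.
From mathcomp Require Import all_boot all_order all_algebra all_fingroup.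
From mathcomp Require Import reals.
From mathcomp Require Import lra.
Import Order.TTheory GRing.Theory Num.Theory.
Local Open Scope ring_scope.

Lemma exists_sorting {R : realType} {n : nat} (x : 'I_n -> R) :
  exists pi : {perm 'I_n}, sorting_perm x pi.
Proof.
set s := sort (fun i j => x i <= x j) (enum 'I_n).
have Hs : size s = n by rewrite size_sort size_enum_ord.
have Hu : uniq s by rewrite sort_uniq enum_uniq.
pose g := fun k : 'I_n => nth k s k.
have ginj : injective g.
  move=> a b; rewrite /g (set_nth_default a b) ?Hs // => /eqP.
  by rewrite nth_uniq ?Hs // => /eqP /val_inj.
exists (perm ginj) => j k jk; rewrite !permE /g.
rewrite (set_nth_default j k) ?Hs //.
have := @sorted_leq_nth _ (fun i j => x i <= x j) _ _ j s _ j k.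
apply.
- by move=> a b c /= h1 h2; exact: le_trans h1 h2.
- by move=> a /=.
- apply: sort_sorted => a b /=; exact: le_total.
- by rewrite inE Hs.
- by rewrite inE Hs.
- exact: jk.
Qed.

Lemma os_gmvs (R : realType) (n : nat) (f : ('I_n -> R) -> R) (j : 'I_n) :
  (forall x, profile_in_A x -> forall pi, sorting_perm x pi -> f x = x (pi j)) ->
  is_GMVS f.
Proof.
move=> Hj.
exists (fun S : {set 'I_n} => if (j < #|S|)%N then 0 else 1); split.
  by move=> S _; rewrite /inA; case: ifP => _; rewrite ?lexx ?ler01.
move=> x xA; have [pi Hpi] := exists_sorting x; rewrite (Hj x xA pi Hpi).
have xj01 := xA (pi j); move: xj01; rewrite /inA => /andP[xj0 xj1].
apply/eqP; rewrite eq_le; apply/andP; split.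
- apply: le_bigmin => // S S0; case: ifP => hS; last by rewrite le_max xj1.
  have Hjn : (j <= n)%N := ltnW (ltn_ord j).
  set T := [set pi (widen_ord Hjn k) | k : 'I_j].
  have : ~~ (S \subset T).
    apply/negP => sub; have := subset_leq_card sub.
    have := leq_imset_card (fun k : 'I_j => pi (widen_ord Hjn k)) (pred_of_simpl predT).
    rewrite card_ord => h1 h2.
    by move: hS; rewrite ltnNge (leq_trans h2 h1).
  case/subsetPn => i iS iT.
  have jle : (j <= (pi^-1)%g i)%N.
    rewrite leqNgt; apply/negP => lt; move/negP: iT; apply; apply/imsetP.
    exists (Ordinal lt) => //; rewrite -[LHS](permKV pi); congr (pi _).
    exact: val_inj.
  apply: le_trans (Hpi _ _ jle) _; rewrite permKV le_max; apply/orP; right.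
  exact: (le_bigmax_cond _ _ iS).
- have Hj1 : (j.+1 <= n)%N := ltn_ord j.
  set S0 := [set pi (widen_ord Hj1 k) | k : 'I_j.+1].
  have cS0 : #|S0| = j.+1.
    rewrite card_imset ?card_ord // => a b /perm_inj /(congr1 val) /= ab.
    exact: val_inj.
  have S0n : S0 != set0.
    apply/set0Pn; exists (pi j); apply/imsetP; exists (Ordinal (ltnSn j)) => //.
    by congr (pi _); apply: val_inj.
  apply: (bigmin_inf S0) => //; rewrite cS0 ltnSn ge_max xj0 /=.
  apply/bigmax_leP; split => // i /imsetP [k _ ->]; apply: Hpi => /=.
  by rewrite -ltnS.
Qed.

Theorem corollary1 (R : realType) (n : nat) (f : ('I_n -> R) -> R) :
  (0 < n)%N ->
  (forall x, profile_in_A x -> inA (f x)) ->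
  (is_order_statistic f <-> is_OWA f /\ is_GMVS f).
Proof.
move=> n0 fA; split.
  case=> j Hj; split; last exact: (@os_gmvs R n f j Hj).
  exists (fun k => if k == j then 1 else 0); split.
    by move=> k; rewrite /inA; case: ifP => _; rewrite ?lexx ?ler01.
  split.
    by rewrite (bigD1 j) //= eqxx big1 ?addr0 // => k /negbTE ->.
  move=> x xA pi Hpi; rewrite (Hj x xA pi Hpi) (bigD1 j) //= eqxx mul1r.
  by rewrite big1 ?addr0 // => k /negbTE ->; rewrite mul0r.
move=> [[w [wA [wsum Hw]]] [alpha [alA Hg]]].
pose e (m : nat) (t : R) : 'I_n -> R := fun i => t * (if (m <= i)%N then 1 else 0).
have eA : forall m t, 0 <= t <= 1 -> profile_in_A (e m t).
  move=> m t /andP[t0 t1] i; rewrite /e /inA.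
  by case: ifP => _; rewrite ?mulr1 ?mulr0 ?lexx ?ler01 ?t0 ?t1.
have eS : forall m t, 0 <= t -> sorting_perm (e m t) 1%g.
  move=> m t t0 a b ab; rewrite !perm1 /e; apply: (ler_wpM2l t0).
  case: (boolP (m <= a)%N) => h1; first by rewrite (leq_trans h1 ab) lexx.
  by case: ifP => _; rewrite ?ler01 ?lexx.
pose W m := \sum_(j < n) w j * (if (m <= j)%N then 1 else 0).
have fe : forall m t, 0 <= t <= 1 -> f (e m t) = t * W m.
  move=> m t tA; have /andP[t0 _] := tA.
  rewrite (Hw _ (eA m t tA) 1%g (eS m t t0)) /W mulr_sumr.
  by apply: eq_bigr => j _; rewrite perm1 /e mulrCA.
have h01 : inA (1 : R) by rewrite /inA; apply/andP; split; lra.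
have h02 : inA (1/2 : R) by rewrite /inA; apply/andP; split; lra.
have W01 : forall m, W m = 0 \/ W m = 1.
  move=> m.
  have h1 := fe m 1 h01; rewrite mul1r in h1.
  have h2 := fe m (1/2) h02.
  have /andP[WA0 WA1] : inA (W m) by rewrite -h1; apply: fA; apply: eA.
  have hWv : forall S : {set 'I_n}, S != set0 ->
      W m <= Num.max (alpha S) (\big[Num.max/0]_(i in S) e m 1 i).
    move=> S S0; rewrite -h1 Hg; last exact: eA.
    by rewrite (bigD1 S) //= ge_min lexx.
  have key : forall S : {set 'I_n}, S != set0 ->
      Num.min (1/2) (W m) <= Num.max (alpha S) (\big[Num.max/0]_(i in S) e m (1/2) i).
    move=> S S0; case: (boolP [exists i in S, (m <= i)%N]).
      case/exists_inP => i iS hi; rewrite ge_min; apply/orP; left.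
      rewrite le_max; apply/orP; right.
      apply: le_trans _ (le_bigmax_cond _ _ iS); by rewrite /e hi mulr1.
    rewrite negb_exists_in => /forall_inP H.
    have -> : \big[Num.max/0]_(i in S) e m (1/2) i = \big[Num.max/0]_(i in S) e m 1 i.
      by apply: eq_bigr => i iS; rewrite /e (negbTE (H i iS)) !mulr0.
    by rewrite ge_min (hWv S S0) orbT.
  have lb : Num.min (1/2) (W m) <= 1/2 * W m.
    rewrite -h2 Hg; last exact: eA.
    apply: le_bigmin; first by rewrite ge_min; apply/orP; left; lra.
    exact: key.
  move: lb; rewrite ge_min => /orP[] h; [right|left]; lra.
have Wrec : forall k : 'I_n, W k = w k + W k.+1.
  move=> k; rewrite /W (bigD1 k) //= [X in _ = _ + X](bigD1 k) //= leqnn ltnn.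
  rewrite mulr1 mulr0 add0r; congr (_ + _); apply: eq_bigr => i ik.
  rewrite ltn_neqAle; have -> : (k != i :> nat) = true by rewrite eq_sym; exact: ik.
  by [].
have w01 : forall k, w k = 0 \/ w k = 1.
  move=> k; have := Wrec k; have /andP[wk0 _] := wA k.
  case: (W01 k) => ->; case: (W01 k.+1) => -> h; [left|lra|lra|left]; lra.
case: (boolP [exists k, w k == 1]).
  case/existsP => j /eqP wj1; exists j => x xA pi Hpi.
  have rest : \sum_(k < n | k != j) w k = 0.
    by move: wsum; rewrite (bigD1 j) //= wj1 => h; lra.
  rewrite (Hw x xA pi Hpi) (bigD1 j) //= wj1 mul1r big1 ?addr0 // => k kj.
  rewrite (psumr_eq0P _ rest) ?mul0r //.
  by move=> i _; have /andP[] := wA i.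
rewrite negb_exists => /forallP H; exfalso.
move: wsum; rewrite big1 => [h|k _]; first by move: (@oner_neq0 R); rewrite h eqxx.
by case: (w01 k) => // h; move: (H k); rewrite h eqxx.
Qed.
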